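(* Let $q=p^n$ with $p$ prime, let $d+1$ be a divisor of $q-1$, and let $f:\mathbb{F}_q\to\mathbb{F}_q$ be a $(d+1)$-divisible Dembowski–Ostrom polynomial which is almost-$(d+1)$-to-1. Then: (a) $f$ is zero-difference $d$-balanced; (b) $f$ is differentially $d$-uniform and all its differential sets $D_a(f)=\{f(x+a)-f(x):x\in\mathbb{F}_q\}$, $a\neq 0$, are $\mathbb{F}_p$-linear subspaces of $\mathbb{F}_q$; (c) $d=p^i$ for some integer $i\geq 0$.
   Context: A polynomial $f\in\mathbb{F}_q[x]$, $q=p^n$, is Dembowski–Ostrom (DO) if it can be written as $\sum_{i,j=0}^{n-1}a_{ij}x^{p^i+p^j}$ when $q$ is odd, and as $\sum_{i\neq j}a_{ij}x^{2^i+2^j}$ when $q$ is even. For a divisor $k$ of $q-1$, $f$ is $k$-divisible if $f(x)=f'(x^k)$ for some map $f'$ (equivalently $f(x)=f(\omega x)$ for all $x$ and all $\omega$ with $\omega^k=1$). $f$ is almost-$k$-to-1 if there is a unique element of $\mathrm{Im}(f)$ with exactly one preimage and every other element of $\mathrm{Im}(f)$ has exactly $k$ preimages. $f$ is differentially $d$-uniform if $d=\max_{a\neq 0,\,b}|\{x: f(x+a)-f(x)=b\}|$. $f$ is zero-difference $d$-balanced if for every nonzero $a$ the equation $f(x+a)-f(x)=0$ has exactly $d$ solutions. *)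

(* Defs.v *)
From HB Require Import structures.
From mathcomp Require Import all_boot all_order all_algebra all_field.
Set Implicit Arguments. Unset Strict Implicit. Unset Printing Implicit Defensive.
Import GRing.Theory.
Local Open Scope ring_scope.

Section Defs.
Variable F : finFieldType.

Definition is_DO (p n : nat) (f : F -> F) : Prop :=
  exists a : 'I_n -> 'I_n -> F, forall x : F,
    f x = \sum_(i < n) \sum_(j < n | (p != 2%N) || (i != j))
            a i j * x ^+ (p ^ i + p ^ j)%N.

Definition k_divisible (k : nat) (f : F -> F) : Prop :=
  exists f' : F -> F, forall x : F, f x = f' (x ^+ k).

Definition npreim (f : F -> F) (y : F) : nat := #|[set x | f x == y]|.

Definition almost_k_to_1 (k : nat) (f : F -> F) : Prop :=
  exists y0 : F, [/\ y0 \in codom f, npreim f y0 = 1%N,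
    (forall y, y \in codom f -> npreim f y = 1%N -> y = y0) &
    (forall y, y \in codom f -> y != y0 -> npreim f y = k)].

Definition ndiff (f : F -> F) (a b : F) : nat :=
  #|[set x | f (x + a) - f x == b]|.

Definition diff_uniform (f : F -> F) (d : nat) : Prop :=
  d = \max_(a : F | a != 0) \max_(b : F) ndiff f a b.

Definition zero_diff_balanced (f : F -> F) (d : nat) : Prop :=
  forall a : F, a != 0 -> ndiff f a 0 = d.

Definition diff_set (f : F -> F) (a : F) : {set F} :=
  [set f (x + a) - f x | x : F].

(* F_p-linear subspace of F (the prime field being {k%:R}). *)
Definition Fp_subspace (S : {set F}) : Prop :=
  [/\ 0 \in S, (forall x y, x \in S -> y \in S -> x + y \in S) &
      (forall (k : nat) x, x \in S -> k%:R * x \in S)].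

End Defs.

(* Main.v *)
Require Import Defs.
From HB Require Import structures.
From mathcomp Require Import all_boot all_order all_algebra all_field.
From mathcomp Require Import all_fingroup all_solvable.
From mathcomp Require Import ring.
Import GRing.Theory.
Local Open Scope ring_scope.
Set Implicit Arguments. Unset Strict Implicit.

Section Aux.
Variable F : finFieldType.

Definition Qp (g : F -> F) := forall x y a : F,
  g (x + y + a) - g (x + y) - g (x + a) - g (y + a) + g x + g y + g a - g 0 = 0.

Lemma Qp_ext (g h : F -> F) : g =1 h -> Qp g -> Qp h.
Proof. by move=> e Q x y a; rewrite -!e; apply: Q. Qed.

Lemma Qp_sum (I : Type) (r : seq I) (P : pred I) (G : I -> F -> F) :
  (forall i, Qp (G i)) -> Qp (fun z => \sum_(i <- r | P i) G i z).
Proof.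
move=> HG; elim: r => [|i r IH] x y a.
  by rewrite !big_nil; ring.
rewrite !big_cons; case: (P i); last exact: IH.
have H := congr2 (fun u v => u + v) (HG i x y a) (IH x y a).
rewrite addr0 in H; apply: etrans H; ring.
Qed.

Lemma frobD (p : nat) (pc : p \in [pchar F]) (i : nat) (x y : F) :
  (x + y) ^+ (p ^ i) = x ^+ (p ^ i) + y ^+ (p ^ i).
Proof.
elim: i => [|i IH]; first by rewrite !expn0 !expr1.
rewrite expnSr !exprM IH -!(pFrobenius_autE pc).
by rewrite pFrobenius_autD_comm //; apply: mulrC.
Qed.

Lemma Qp_bil (u v : F -> F) (c : F) :
  (forall x y, u (x + y) = u x + u y) -> (forall x y, v (x + y) = v x + v y) ->
  Qp (fun z => c * (u z * v z)).
Proof.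
move=> Hu Hv x y a.
have u0 : u 0 = 0 by apply: (addrI (u 0)); rewrite -Hu !addr0.
have v0 : v 0 = 0 by apply: (addrI (v 0)); rewrite -Hv !addr0.
rewrite !Hu !Hv u0 v0; ring.
Qed.

Lemma Qp_mono (p : nat) (pc : p \in [pchar F]) (c : F) (i j : nat) :
  Qp (fun z => c * z ^+ (p ^ i + p ^ j)).
Proof.
apply: (@Qp_ext (fun z => c * (z ^+ (p ^ i) * z ^+ (p ^ j)))).
  by move=> z; rewrite exprD.
by apply: Qp_bil => x y; apply: frobD.
Qed.

Lemma DO_affine (p n : nat) (f : F -> F) : p \in [pchar F] -> is_DO p n f ->
  forall a x y, (f (x + y + a) - f (x + y)) + (f (0 + a) - f 0) =
                (f (x + a) - f x) + (f (y + a) - f y).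
Proof.
move=> pc [c Hf] a x y.
have Q : Qp f.
  apply: (@Qp_ext (fun z => \sum_(i < n) \sum_(j < n | (p != 2%N) || (i != j))
            c i j * z ^+ (p ^ i + p ^ j))); first by move=> z; rewrite Hf.
  apply: Qp_sum => i; apply: Qp_sum => j; exact: Qp_mono.
apply/eqP; rewrite -subr_eq0; apply/eqP; apply: etrans (Q x y a).
rewrite add0r; ring.
Qed.


Lemma shift_le (A B : {set F}) (t : F) :
  (forall x, x \in A -> x + t \in B) -> (#|A| <= #|B|)%N.
Proof.
move=> H; rewrite -(card_imset A (addIr t)); apply: subset_leq_card.
by apply/subsetP => _ /imsetP [x xA ->]; apply: H.
Qed.

Section Affine.
Variable g : F -> F.
Hypothesis A : forall x y, g (x + y) + g 0 = g x + g y.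
Variable x0 : F.
Hypothesis gx0 : g x0 = 0.

Lemma gsub x y : g (x - y) = g x + g 0 - g y.
Proof.
apply: (addIr (g y)); rewrite -[g (x - y) + g y]A subrK.
by rewrite subrK.
Qed.

Lemma ndiff_le b : (#|[set x | g x == b]| <= #|[set x | g x == 0%R]|)%N.
Proof.
case: (set_0Vmem [set x | g x == b]) => [->|[x1]]; first by rewrite cards0.
rewrite inE => /eqP gx1.
apply: (@shift_le _ _ (x0 - x1)) => y; rewrite !inE => /eqP gy.
rewrite -(opprB x1 x0) gsub gsub gy gx1 gx0; apply/eqP; ring.
Qed.

Lemma affine_subspace : Fp_subspace [set g x | x : F].
Proof.
have Z : 0 \in [set g x | x : F] by apply/imsetP; exists x0.
have P : forall u v, u \in [set g x | x : F] -> v \in [set g x | x : F] ->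
    u + v \in [set g x | x : F].
  move=> _ _ /imsetP [u _ ->] /imsetP [v _ ->]; apply/imsetP; exists (u + v - x0) => //.
  by rewrite gsub gx0 subr0 A.
split => // k x Hx; elim: k => [|k IH]; first by rewrite mul0r.
by rewrite -addn1 natrD mulrDl mul1r; apply: P.
Qed.

Lemma affine_card_dvd : (#|[set x | g x == 0%R]| %| #|F|)%N.
Proof.
pose K := [set x | g x == g 0].
have gK : group_set K.
  apply/group_setP; split; first by rewrite inE.
  move=> x y; rewrite !inE => /eqP hx /eqP hy.
  have -> : (x * y)%g = x + y by []; apply/eqP; apply: (addIr (g 0)); by rewrite A hx hy.
have -> : #|[set x | g x == 0%R]| = #|K|.
  apply/eqP; rewrite eqn_leq; apply/andP; split.
    apply: (@shift_le _ _ (- x0)) => x; rewrite !inE => /eqP hx.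
    by rewrite gsub hx gx0 subr0 add0r.
  apply: (@shift_le _ _ x0) => x; rewrite !inE => /eqP hx.
  by apply/eqP; apply: (addIr (g 0)); rewrite A hx gx0 add0r addr0.
have := cardSg (subsetT (Group gK)); by rewrite cardsT.
Qed.

End Affine.

End Aux.

Theorem lemma3p1 (F : finFieldType) (p n d : nat) (f : F -> F) :
  prime p -> p \in [pchar F] -> #|F| = (p ^ n)%N ->
  ((d.+1) %| #|F|.-1)%N ->
  is_DO p n f -> k_divisible d.+1 f -> almost_k_to_1 d.+1 f ->
  [/\ zero_diff_balanced f d,
      diff_uniform f d /\ (forall a : F, a != 0 -> Fp_subspace (diff_set f a))
    & exists i : nat, d = (p ^ i)%N].
Proof.
move=> pp pc cardF kdiv DO [f' Hf'] [y0 [y0im y01 y0uniq y0k]].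
have dn0 : d != 0%N.
  apply/eqP => d0; move: y0k; rewrite d0 => y0k.
  case/codomP: y0im y01 y0uniq y0k => x0 -> y01 y0uniq y0k.
  have x1n : x0 + 1 != x0 by rewrite -subr_eq0 addrAC subrr add0r oner_eq0.
  case: (eqVneq (f (x0 + 1)) (f x0)) => [e|ne].
    have : (2 <= npreim f (f x0))%N.
      have c2 : #|[set x0 + 1; x0]| = 2%N by rewrite cards2 x1n.
      rewrite /npreim -c2.
      by apply: subset_leq_card; apply/subsetP => z; rewrite !inE => /orP [] /eqP ->;
         rewrite ?e.
    by rewrite y01.
  have := y0uniq _ (codom_f f _) (y0k _ (codom_f f _) ne).
  by move/eqP; rewrite (negbTE ne).
pose R := [set w : F | w ^+ d.+1 == 1].
have divR : forall w x, w \in R -> f (w * x) = f x.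
  by move=> w x; rewrite inE => /eqP wk; rewrite !Hf' exprMn wk mul1r.
have Rge : (d.+1 <= #|R|)%N.
  have := field_unit_group_cyclic [set: {unit F}]%G; case/cyclicP => u Hu.
  have ou : #[u]%g = #|F|.-1 by rewrite /order -Hu card_finField_unit.
  have [m qm] : exists m, #|F|.-1 = (m * d.+1)%N.
    by exists (#|F|.-1 %/ d.+1)%N; rewrite divnK.
  have m0 : (0 < m)%N.
    by move: (order_gt0 u); rewrite ou qm muln_gt0 => /andP [].
  have ok : #[u ^+ m]%g = d.+1.
    by rewrite orderXdiv ou qm ?dvdn_mulr // mulKn.
  apply: (@leq_trans #|[set val x | x in (<[u ^+ m]> : {set {unit F}})%g]|).
    by rewrite card_imset; [rewrite -ok | exact: val_inj].
  apply: subset_leq_card; apply/subsetP => _ /imsetP [x xin ->].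
  by rewrite inE -FinRing.val_unitX -ok /order (expg_cardG xin).
have cR : forall x, x != 0 -> #|[set w * x | w in R]| = #|R|.
  by move=> x xn; rewrite card_imset //; apply: mulIf.
have fib : forall x, [set w * x | w in R] \subset [set z | f z == f x].
  by move=> x; apply/subsetP => _ /imsetP [w wR ->]; rewrite inE divR.
have npx : forall x, x != 0 -> npreim f (f x) = d.+1.
  move=> x xn.
  have ge : (2 <= npreim f (f x))%N.
    apply: leq_trans (subset_leq_card (fib x)); rewrite cR //.
    by apply: leq_trans Rge; rewrite ltnS lt0n.
  have ne : f x != y0 by apply/eqP => e; move: ge; rewrite e y01.
  exact: y0k (codom_f f x) ne.
have cRk : #|R| = d.+1.
  apply/eqP; rewrite eqn_leq Rge andbT -(npx 1 (oner_neq0 F)) -(cR 1 (oner_neq0 F)).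
  exact: subset_leq_card (fib 1).
have fibE : forall x, x != 0 -> [set z | f z == f x] = [set w * x | w in R].
  move=> x xn; apply/eqP; rewrite eq_sym eqEcard fib /= cR // cRk.
  by rewrite -(npx x xn).
have key : forall x y, x != 0 -> f y = f x -> exists2 w, w \in R & y = w * x.
  move=> x y xn e; have : y \in [set z | f z == f x] by rewrite inE e.
  by rewrite fibE // => /imsetP [w wR ->]; exists w.
have nz : forall x, x != 0 -> f x != f 0.
  move=> x xn; apply/eqP => e.
  have y0E : y0 = f 0.
    case/codomP: y0im y01 => x0 -> y01; case: (eqVneq x0 0) => [->//|x0n].
    by move: y01; rewrite npx // => -[] /eqP; rewrite (negbTE dn0).
  have : (2 <= npreim f (f 0%R))%N.
    have c2 : #|[set x; 0%R]| = 2%N by rewrite cards2 xn.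
    rewrite /npreim -c2.
    by apply: subset_leq_card; apply/subsetP => z; rewrite !inE => /orP [] /eqP ->;
       rewrite ?e.
  by rewrite -y0E y01.
have Sa : forall a, a != 0 -> #|[set x | f (x + a) - f x == 0]| = d.
  move=> a an.
  have SE : [set x | f (x + a) - f x == 0] = [set a / (w - 1) | w in R :\ 1].
    apply/setP => x; rewrite inE subr_eq0; apply/eqP/imsetP.
      move=> e; case: (eqVneq x 0) => [x0|xn].
        by move: e (nz a an); rewrite x0 add0r => ->; rewrite eqxx.
      have [w wR xa] := key x (x + a) xn e.
      have ax : a = w * x - x by rewrite -xa addrAC subrr add0r.
      have w1 : w != 1.
        apply/eqP => w1; move: ax; rewrite w1 mul1r subrr => a0.
        by rewrite a0 eqxx in an.
      have w1' : w - 1 != 0 by rewrite subr_eq0.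
      exists w; first by rewrite in_setD1 w1.
      by rewrite ax; field.
    case=> w; rewrite in_setD1 => /andP [w1 wR] ->.
    have w1' : w - 1 != 0 by rewrite subr_eq0.
    have -> : a / (w - 1) + a = w * (a / (w - 1)) by field.
    exact: divR.
  rewrite SE card_in_imset.
    have := cardsD1 1 R; rewrite cRk inE expr1n eqxx add1n.
    by case.
  move=> w1 w2; rewrite !in_setD1 => /andP [n1 _] /andP [n2 _] e.
  have : (w1 - 1)^-1 = (w2 - 1)^-1 by apply: (mulfI an).
  by move/invr_inj/addIr.
have Aff : forall a x y, (fun z => f (z + a) - f z) (x + y) + (fun z => f (z + a) - f z) 0
      = (fun z => f (z + a) - f z) x + (fun z => f (z + a) - f z) y.
  by move=> a x y /=; exact: (DO_affine pc DO a x y).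
have S0 : forall a, a != 0 -> exists x0, f (x0 + a) - f x0 = 0.
  move=> a an; have : (0 < #|[set x : F | (f (x + a) - f x == 0)%R]|)%N by rewrite Sa // lt0n.
  by case/card_gt0P => x; rewrite inE => /eqP; exists x.
have inner : forall a, a != 0 -> \max_(b : F) ndiff f a b = d.
  move=> a an; have [x0 gx0] := S0 a an.
  apply/eqP; rewrite eqn_leq; apply/andP; split.
    apply/bigmax_leqP => b _; rewrite -(Sa a an).
    exact: (ndiff_le (Aff a) gx0).
  by apply: (leq_trans _ (leq_bigmax 0%R)); rewrite /ndiff Sa.
split.
- by move=> a an; rewrite /ndiff Sa.
- split.
    rewrite /diff_uniform; apply/eqP; rewrite eqn_leq; apply/andP; split.
      by apply: (leq_trans _ (leq_bigmax_cond 1 (oner_neq0 F))); rewrite inner ?oner_neq0.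
    by apply/bigmax_leqP => a an; rewrite inner.
  move=> a an; have [x0 gx0] := S0 a an.
  exact: (affine_subspace (Aff a) gx0).
- have [x0 gx0] := S0 1 (oner_neq0 F).
  have := affine_card_dvd (Aff 1) gx0; rewrite Sa ?oner_neq0 // cardF.
  by case/(dvdn_pfactor _ _ pp) => m _ ->; exists m.
Qed.
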